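(* Let $X$ be a real Banach space with a normalized Schauder basis $\mathcal B=(e_n)_{n=1}^\infty$ with biorthogonal functionals $(e_n^* )$ which is unconditional or boundedly complete, and let $\mathcal E=(\varepsilon_n)_{n=1}^\infty$ be a sequence of nonnegative numbers. If the brick $K_{\mathcal B,\mathcal E}$ has finite extreme radius, then $K_{\mathcal B,\mathcal E}$ is compact.
   Context: The brick is $K_{\mathcal B,\mathcal E}=\{x\in X:\ |e_n^*(x)|\le\varepsilon_n \text{ for all } n\}$. A point $x_0\in A$ is an extreme point of $A$ if for every nonzero $x\in X$ there is $\lambda\in[-1,1]$ with $x_0+\lambda x\notin A$. The extreme radius of $K$ is the supremum of $\|x_0\|$ over extreme points $x_0$ of $K$ if an extreme point exists, and $\infty$ otherwise. A basis is unconditional if $\sum_ne_n^*(x)e_n$ converges unconditionally for every $x$; it is boundedly complete if $\sup_n\|\sum_{k=1}^na_ke_k\|<\infty$ implies convergence of $\sum_na_ne_n$. *)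

(* Defs.v *)
From HB Require Import structures.
From mathcomp Require Import all_boot all_order all_algebra.
From mathcomp Require Import all_classical all_reals all_analysis.
Set Implicit Arguments. Unset Strict Implicit. Unset Printing Implicit Defensive.
Import Order.TTheory GRing.Theory Num.Theory numFieldNormedType.Exports.
Local Open Scope classical_set_scope.
Local Open Scope ring_scope.

Section Bricks.
Variables (R : realType) (X : normedModType R).

Definition schauder_basis (e : nat -> X) (estar : nat -> X -> R) : Prop :=
  (forall x, series (fun n => estar n x *: e n) @ \oo --> x) /\
  (forall x (a : nat -> R), series (fun n => a n *: e n) @ \oo --> x ->
     forall n, a n = estar n x).

Definition normalized (e : nat -> X) : Prop := forall n, `|e n| = 1.

Definition unconditional (e : nat -> X) (estar : nat -> X -> R) : Prop :=
  forall x (s : nat -> nat), bijective s ->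
    cvg (series (fun n => estar (s n) x *: e (s n)) @ \oo).

Definition boundedly_complete (e : nat -> X) : Prop :=
  forall a : nat -> R,
    (exists M : R, forall n, `|series (fun k => a k *: e k) n| <= M) ->
    cvg (series (fun k => a k *: e k) @ \oo).

Definition brick (estar : nat -> X -> R) (eps : nat -> R) : set X :=
  [set x | forall n, `|estar n x| <= eps n].

Definition extreme_point (A : set X) (x0 : X) : Prop :=
  A x0 /\ forall x, x != 0 ->
    exists2 l : R, -1 <= l <= 1 & ~ A (x0 + l *: x).

Definition extreme_radius (A : set X) : \bar R :=
  if pselect (exists x0, extreme_point A x0)
  then ereal_sup [set (`|x0|)%:E | x0 in extreme_point A]
  else +oo%E.

End Bricks.

(* Main.v *)
Require Import Defs.
From HB Require Import structures.
From mathcomp Require Import all_boot all_order all_algebra.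
From mathcomp Require Import all_classical all_reals all_analysis.
From mathcomp Require Import ring lra.
Import Order.TTheory GRing.Theory Num.Theory numFieldNormedType.Exports.
Local Open Scope classical_set_scope.
Local Open Scope ring_scope.



Section Basis.
Variables (R : realType) (X : normedModType R).
Variables (e : nat -> X) (estar : nat -> X -> R) (eps : nat -> R).
Hypothesis hS : schauder_basis e estar.
Hypothesis hN : normalized e.

Lemma estar_lin n x z l : estar n (x + l *: z) = estar n x + l * estar n z.
Proof.
apply/esym; apply: (proj2 hS (x + l *: z) (fun k => estar k x + l * estar k z)).
have -> : (fun k => (estar k x + l * estar k z) *: e k) =
  (fun k => estar k x *: e k) + l *: (fun k => estar k z *: e k).
  by apply/funext => k /=; rewrite scalerDl -scalerA.
rewrite seriesD seriesZ.
apply: cvgD; first exact: (proj1 hS).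
exact: cvgZr (proj1 hS z).
Qed.

Lemma estar0 n : estar n 0 = 0.
Proof.
apply/esym; apply: (proj2 hS (0 : X) (fun _ => 0)).
have -> : series (fun k => (0 : R) *: e k) = fun _ => 0.
  apply/funext => k; rewrite /series /=; apply: big1 => i _; exact: scale0r.
exact: cvg_cst.
Qed.

Lemma estar_add n x z : estar n (x + z) = estar n x + estar n z.
Proof. by rewrite -[z in LHS]scale1r estar_lin mul1r. Qed.

Lemma estar_scale n l z : estar n (l *: z) = l * estar n z.
Proof. by rewrite -[l *: z]add0r estar_lin estar0 add0r. Qed.

Lemma estar_e n k : estar n (e k) = (n == k)%:R.
Proof.
apply/esym; apply: (proj2 hS (e k) (fun m => (m == k)%:R)).
apply: cvg_near_cst; exists k.+1 => // N /= kN.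
rewrite /series /= (bigD1_seq k) ?mem_index_iota ?iota_uniq //= eqxx scale1r.
rewrite big1 ?addr0 // => i /negbTE ->; exact: scale0r.
Qed.

Lemma estar_sum k (r : seq nat) (P : pred nat) (c : nat -> R) : uniq r ->
  estar k (\sum_(i <- r | P i) c i *: e i) = if (k \in r) && P k then c k else 0.
Proof.
elim: r => [|j r IH] /=; first by rewrite big_nil estar0.
move=> /andP[jr ur]; rewrite big_cons in_cons.
case: ifP => Pj.
  rewrite estar_add IH // estar_scale estar_e.
  have [->|kj] := eqVneq k j; first by rewrite (negbTE jr) /= Pj mulr1 addr0.
  by rewrite /= mulr0 add0r.
rewrite IH //; have [->|kj] := eqVneq k j => /=; last by [].
by rewrite (negbTE jr) Pj.
Qed.

Lemma estar_zero x : (forall n, estar n x = 0) -> x = 0.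
Proof.
move=> h; have := proj1 hS x.
have -> : series (fun n => estar n x *: e n) = fun _ => 0.
  apply/funext => k; rewrite /series /=; apply: big1 => i _; by rewrite h scale0r.
move=> hc.
have h2 : (fun _ : nat => (0:X)) @ \oo --> (0:X) by apply: cvg_cst.
by rewrite -(cvg_lim (@norm_hausdorff R X) hc) (cvg_lim (@norm_hausdorff R X) h2).
Qed.

Definition brk := brick estar eps.

Lemma ext1 y : extreme_point brk y -> forall k, `|estar k y| = eps k.
Proof.
move=> [by_ hy] k; apply/eqP; rewrite eq_le by_ /=.
rewrite leNgt; apply/negP => hlt.
set d := eps k - `|estar k y|.
have d0 : 0 < d by rewrite subr_gt0.
have hx : d *: e k != 0.
  by rewrite -normr_eq0 normrZ hN mulr1 gtr0_norm // gt_eqF.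
have [l /andP[l1 l2] hnot] := hy _ hx; apply: hnot => n.
rewrite scalerA estar_lin estar_e.
have [->|nk] := eqVneq n k; last by rewrite mulr0 addr0; exact: by_.
rewrite mulr1; apply: (le_trans (ler_normD _ _)).
rewrite normrM (gtr0_norm d0).
have : `|l| <= 1 by rewrite ler_norml l1 l2.
move=> hl; have := ler_wpM2r (ltW d0) hl; rewrite mul1r /d; lra.
Qed.

Lemma ext2 y : (forall k, `|estar k y| = eps k) -> extreme_point brk y.
Proof.
move=> hy; split; first by move=> k; rewrite hy.
move=> x x0.
have [k hk] : exists k, estar k x != 0.
  apply/not_existsP => H; move/eqP: x0; apply; apply: estar_zero => n.
  by apply/eqP/negP => /negP h; apply: (H n).
set a := estar k y; set c := estar k x.
have [h|h] := ltP (eps k) `|a + c|.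
  exists 1; first by apply/andP; split => //; lra.
  move=> /(_ k); rewrite estar_lin mul1r -/a -/c; by rewrite leNgt h.
exists (-1); first by apply/andP; split => //; lra.
move=> /(_ k); rewrite estar_lin -/a -/c mulN1r => h2.
move: h h2; rewrite -(hy k) -/a => h1 h2.
move: hk; rewrite -/c => /eqP; apply.
move: h1 h2; rewrite !ler_norml.
have [a0|a0] := leP 0 a.
  rewrite (ger0_norm a0) => /andP[h1 h2] /andP[h3 h4]; lra.
rewrite (ltr0_norm a0) => /andP[h1 h2] /andP[h3 h4]; lra.
Qed.

Lemma radius_bound : (extreme_radius brk < +oo)%E ->
  exists x0, extreme_point brk x0 /\
     exists M0, forall y, extreme_point brk y -> `|y| <= M0.
Proof.
rewrite /extreme_radius; case: pselect => [[x0 hx0]|nE] /=; last by rewrite ltxx.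
move=> hlt; exists x0; split => //.
set S := ereal_sup _ in hlt.
have ub y : extreme_point brk y -> ((`|y|)%:E <= S)%E.
  by move=> hy; apply: ereal_sup_ubound; exists y.
have := ub _ hx0; move: hlt ub; case: S => [r| |] //= _ ub _.
by exists r => y /ub; rewrite lee_fin.
Qed.

End Basis.



Section Generic.
Variables (R : realType) (X : normedModType R).

Lemma conv1 (u z : X) (l : R) : `|l| <= 1 ->
  exists b : bool, `|u + l *: z| <= `|u + (if b then z else - z)|.
Proof.
move=> hl.
have -> : u + l *: z = ((1 + l) / 2) *: (u + z) + ((1 - l) / 2) *: (u - z).
  rewrite !scalerDr !scalerN addrACA -scalerDl -scalerBl.
  have c1 : (1 + l) / 2 + (1 - l) / 2 = 1 :> R by field.
  have c2 : (1 + l) / 2 - (1 - l) / 2 = l :> R by field.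
  by rewrite c1 c2 scale1r.
have l1 : 0 <= (1 + l) / 2 by move: hl; rewrite ler_norml => /andP[? ?]; lra.
have l2 : 0 <= (1 - l) / 2 by move: hl; rewrite ler_norml => /andP[? ?]; lra.
have H := ler_normD ((1 + l) / 2 *: (u + z)) ((1 - l) / 2 *: (u - z)).
rewrite !normrZ -!normrM (ger0_norm l1) (ger0_norm l2) in H.
have [h|h] := leP `|u + z| `|u - z|.
  exists false; apply: (le_trans H).
  have h1 := ler_wpM2l l1 h.
  nra.
exists true; apply: (le_trans H).
have h1 := ler_wpM2l l2 (ltW h).
nra.
Qed.

Lemma conv_sgn (r : seq nat) (v : X) (w : nat -> X) (lam : nat -> R) : uniq r ->
  (forall i, `|lam i| <= 1) -> exists P : pred nat,
  `|v + \sum_(i <- r) lam i *: w i| <=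
    `|v + \sum_(i <- r) (if P i then w i else - w i)|.
Proof.
move=> + hl; elim: r v => [|j r IH] v /=.
  by move=> _; exists xpred0; rewrite !big_nil.
move=> /andP[jr ur]; have [P HP] := IH (v + lam j *: w j) ur.
set T := \sum_(i <- r) (if P i then w i else - w i) in HP.
have [b hb] := @conv1 (v + T) (w j) (lam j) (hl j).
exists (fun i => if i == j then b else P i).
rewrite !big_cons eqxx.
have -> : \sum_(i <- r) (if (if i == j then b else P i) then w i else - w i) = T.
  apply: eq_big_seq => i ir; have [ij|//] := eqVneq i j.
  by move: jr; rewrite -ij ir.
rewrite addrA; apply: (le_trans HP).
rewrite -(addrA v) (addrC (lam j *: w j)) addrA; apply: (le_trans hb).
by rewrite -(addrA v) (addrC T).
Qed.

End Generic.

Lemma shift_sum (V : zmodType) (F : nat -> V) (N m m' : nat) (P : pred nat) :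
  (N <= m)%N -> \sum_(m <= i < m' | P i) F i = \sum_(N <= i < m' | (m <= i)%N && P i) F i.
Proof.
move=> Nm; have [mm'|m'm] := leqP m m'.
  rewrite (big_cat_nat Nm mm') /=.
  have -> : \sum_(N <= i < m | (m <= i)%N && P i) F i = 0.
    rewrite big_nat_cond; apply: big1 => i /andP[/andP[_ im] /andP[mi _]].
    by move: (leq_ltn_trans mi im); rewrite ltnn.
  rewrite add0r big_nat_cond [RHS]big_nat_cond; apply: eq_bigl => i.
  by case mi: (m <= i)%N => //=; rewrite andbF.
rewrite big_geq ?(ltnW m'm) // big_nat_cond big1 // => i /andP[/andP[_ im'] /andP[mi _]].
by have := leq_ltn_trans mi (ltn_trans im' m'm); rewrite ltnn.
Qed.



Definition Qall (b : nat -> nat) (Q : nat -> pred nat) (j : nat) :=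
  [exists k : 'I_j.+1, (b k <= j < b k.+1)%N && Q k j].

Section Blocks.
Variable b : nat -> nat.
Hypothesis hb : forall k, (b k < b k.+1)%N.

Lemma bmono k1 k2 : (k1 <= k2)%N -> (b k1 <= b k2)%N.
Proof. by apply: (homo_leq leqnn leq_trans) => i; exact: ltnW. Qed.

Lemma bge k : (k <= b k)%N.
Proof. by elim: k => // k IH; exact: leq_ltn_trans IH (hb k). Qed.

Lemma blk_eq (Q : nat -> pred nat) k j : (b k <= j < b k.+1)%N ->
  Qall b Q j = Q k j.
Proof.
move=> /andP[hj1 hj2]; apply/existsP/idP.
  move=> [k' /andP[/andP[h1 h2] hq]]; suff <- : (k' : nat) = k by [].
  apply/eqP; rewrite eqn_leq; apply/andP; split; rewrite leqNgt; apply/negP => hlt.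
    by have := leq_trans (bmono _ _ hlt) h1; rewrite leqNgt hj2.
  by have := leq_trans (bmono _ _ hlt) hj1; rewrite leqNgt h2.
move=> hq; have kj : (k < j.+1)%N by rewrite ltnS (leq_trans (bge k) hj1).
by exists (Ordinal kj); rewrite /= hj1 hj2 hq.
Qed.
End Blocks.

Section BlocksX.
Variables (R : realType) (X : normedModType R).

Lemma blocks (w : nat -> X) (eps : R) : 0 < eps ->
  (forall N, exists m' (P : pred nat), eps < `|\sum_(N <= i < m' | P i) w i|) ->
  exists (b : nat -> nat) (Q : nat -> pred nat), b 0 = 0%N /\
    (forall k, (b k < b k.+1)%N) /\
    (forall k, eps < `|\sum_(b k <= i < b k.+1 | Q k i) w i|).
Proof.
move=> e0 H.
have H' : forall N, exists p : nat * pred nat, eps < `|\sum_(N <= i < p.1 | p.2 i) w i|.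
  by move=> N; have [m' [P hP]] := H N; exists (m', P).
have [f hf] := choice H'.
pose b := fix b k := if k is k'.+1 then (f (b k')).1 else 0%N.
exists b, (fun k => (f (b k)).2); split => //; split; last by move=> k; exact: hf.
move=> k; rewrite ltnNge; apply/negP => hle; have := hf (b k).
by rewrite /= (big_geq hle) normr0 ltNge (ltW e0).
Qed.

Lemma neg_tail (w : nat -> X) (eps : R) :
  ~ (exists N, forall m' (P : pred nat), `|\sum_(N <= i < m' | P i) w i| <= eps) ->
  forall N, exists m' (P : pred nat), eps < `|\sum_(N <= i < m' | P i) w i|.
Proof.
move=> hn N; apply: contrapT => hN; apply: hn; exists N => m' P.
rewrite leNgt; apply/negP => hlt; apply: hN; by exists m', P.
Qed.

Lemma cauchy_ser (u : nat -> X) (eps : R) : 0 < eps -> cvg (series u @ \oo) ->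
  exists N, forall n1 n2, (N <= n1)%N -> (N <= n2)%N -> `|\sum_(n1 <= k < n2) u k| < eps.
Proof.
move=> e0 hc.
have hC : cauchy (series u @ \oo) by apply: cvg_cauchy.
move/cauchy_seriesP: hC => /(_ eps e0) [[A1 A2] /= [[N1 _ hN1] [N2 _ hN2]] hA].
exists (maxn N1 N2) => n1 n2 h1 h2.
apply: (hA (n1, n2)); split.
  by apply: hN1; exact: leq_trans (leq_maxl _ _) h1.
by apply: hN2; exact: leq_trans (leq_maxr _ _) h2.
Qed.

End BlocksX.



Section TailBC.
Variables (R : realType) (X : normedModType R).

Lemma tail_bc (e : nat -> X) (a : nat -> R) (B : R) :
  boundedly_complete e ->
  (forall n (P : pred nat), `|\sum_(0 <= i < n | P i) a i *: e i| <= B) ->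
  forall eps, 0 < eps -> exists N, forall m' (P : pred nat),
    `|\sum_(N <= i < m' | P i) a i *: e i| <= eps.
Proof.
move=> bc hB eps e0; apply: contrapT => /neg_tail H.
have [b [Q [_ [hb hQ]]]] := @blocks R X _ eps e0 H.
pose Qa := Qall b Q.
pose c j := if Qa j then a j else 0.
have hc : cvg (series (fun k => c k *: e k) @ \oo).
  apply: bc; exists B => n; rewrite /series /=.
  have -> : \sum_(0 <= k < n) c k *: e k = \sum_(0 <= k < n | Qa k) a k *: e k.
    rewrite [RHS]big_mkcond; apply: eq_bigr => k _; rewrite /c.
    by case: ifP => //; rewrite scale0r.
  exact: hB.
have [N hN] := @cauchy_ser R X _ eps e0 hc.
have hk := hN (b N) (b N.+1) (@bge b hb N) (leq_trans (@bge b hb N) (ltnW (hb N))).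
have := hQ N.
have -> : \sum_(b N <= i < b N.+1 | Q N i) a i *: e i = \sum_(b N <= k < b N.+1) c k *: e k.
  rewrite big_mkcond [RHS]big_nat_cond [LHS]big_nat_cond; apply: eq_bigr => j /andP[hj _].
  rewrite /c /Qa (@blk_eq b hb Q N j hj).
  by case: ifP => //; rewrite scale0r.
by move=> h; have := lt_trans h hk; rewrite ltxx.
Qed.

End TailBC.



Fixpoint Gs (l : nat -> seq nat) (k : nat) : seq nat :=
  if k is k'.+1 then Gs l k' ++ l k' else [::].
Definition sp (l : nat -> seq nat) (n : nat) := nth 0%N (Gs l n.+1) n.
Definition spi (l : nat -> seq nat) (n : nat) := index n (Gs l n.+1).

Section Perm.
Variables (b : nat -> nat) (l : nat -> seq nat).
Hypothesis hb0 : b 0 = 0%N.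
Hypothesis hb : forall k, (b k < b k.+1)%N.
Hypothesis hl : forall k, perm_eq (l k) (index_iota (b k) (b k.+1)).

Lemma G_perm k : perm_eq (Gs l k) (iota 0 (b k)).
Proof.
elim: k => [|k IH] /=; first by rewrite hb0.
have -> : iota 0 (b k.+1) = iota 0 (b k) ++ index_iota (b k) (b k.+1).
  by rewrite /index_iota -{1}(subnKC (ltnW (hb k))) iotaD add0n.
by rewrite perm_cat.
Qed.

Lemma G_size k : size (Gs l k) = b k.
Proof. by rewrite (perm_size (G_perm k)) size_iota. Qed.

Lemma G_uniq k : uniq (Gs l k).
Proof. by rewrite (perm_uniq (G_perm k)) iota_uniq. Qed.

Lemma G_mem k x : (x \in Gs l k) = (x < b k)%N.
Proof. by rewrite (perm_mem (G_perm k)) mem_iota. Qed.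

Lemma G_prefix k k' : (k <= k')%N -> exists t, Gs l k' = Gs l k ++ t.
Proof.
elim: k' => [|k' IH]; first by rewrite leqn0 => /eqP->; exists [::]; rewrite cats0.
rewrite leq_eqVlt => /orP[/eqP->|]; first by exists [::]; rewrite cats0.
by rewrite ltnS => /IH [t et]; exists (t ++ l k'); rewrite /= et catA.
Qed.

Lemma sG k j : (j < b k)%N -> sp l j = nth 0%N (Gs l k) j.
Proof.
move=> hj; rewrite /sp.
have [t1 e1] := G_prefix _ _ (leq_maxl k j.+1).
have [t2 e2] := G_prefix _ _ (leq_maxr k j.+1).
have hj' : (j < b j.+1)%N := leq_trans (ltnSn j) (@bge b hb j.+1).
have h1 : nth 0%N (Gs l (maxn k j.+1)) j = nth 0%N (Gs l k) j.
  by rewrite e1 nth_cat G_size hj.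
have h2 : nth 0%N (Gs l (maxn k j.+1)) j = nth 0%N (Gs l j.+1) j.
  by rewrite e2 nth_cat G_size hj'.
by rewrite -h2 h1.
Qed.

Lemma sp_bij : bijective (sp l).
Proof.
exists (spi l).
  move=> n; rewrite /spi; set m := sp l n.
  set K := maxn n.+1 m.+1.
  have nK : (n < b K)%N.
    exact: leq_trans (leq_maxl n.+1 m.+1) (@bge b hb K).
  have hm : m = nth 0%N (Gs l K) n by rewrite /m (sG _ _ nK).
  have [t et] := G_prefix _ _ (leq_maxr n.+1 m.+1).
  have mm : m \in Gs l m.+1 by rewrite G_mem (leq_trans (ltnSn m) (@bge b hb m.+1)).
  have -> : index m (Gs l m.+1) = index m (Gs l K).
    by rewrite et [RHS]index_cat mm.
  by rewrite hm index_uniq ?G_uniq ?G_size.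
move=> n; rewrite /spi.
have hin : n \in Gs l n.+1 by rewrite G_mem (leq_trans (ltnSn n) (@bge b hb n.+1)).
have ilt : (index n (Gs l n.+1) < b n.+1)%N by rewrite -G_size index_mem.
by rewrite (sG _ _ ilt) nth_index.
Qed.

Lemma sp_sum (V : zmodType) (f : nat -> V) N k : (N <= b k)%N ->
  \sum_(0 <= j < N) f (sp l j) = \sum_(x <- take N (Gs l k)) f x.
Proof.
elim: N => [|N IH] hN; first by rewrite big_geq // take0 big_nil.
rewrite big_nat_recr //= IH ?(ltnW hN) // (take_nth 0%N) ?G_size //.
by rewrite -cats1 big_cat big_seq1 (sG _ _ hN).
Qed.

End Perm.

Section TailPerm.
Variables (R : realType) (X : normedModType R).

Lemma tail_perm (w : nat -> X) :
  (forall s, bijective s -> cvg (series (fun n => w (s n)) @ \oo)) ->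
  forall eps, 0 < eps -> exists N, forall m' (P : pred nat),
    `|\sum_(N <= i < m' | P i) w i| <= eps.
Proof.
move=> hu eps e0; apply: contrapT => /neg_tail H.
have [b [Q [hb0 [hb hQ]]]] := @blocks R X _ eps e0 H.
pose rng k := index_iota (b k) (b k.+1).
pose l k := [seq x <- rng k | Q k x] ++ [seq x <- rng k | predC (Q k) x].
have hl k : perm_eq (l k) (rng k) by rewrite /l perm_filterC.
have hs := @sp_bij b l hb0 hb hl.
have [N hN] := @cauchy_ser R X _ eps e0 (hu _ hs).
set F := [seq x <- rng N | Q N x].
have szF : (b N + size F <= b N.+1)%N.
  rewrite -[X in (_ <= X)%N](subnKC (ltnW (hb N))) leq_add2l size_filter.
  by rewrite (leq_trans (count_size _ _)) // size_iota.
have hk := hN (b N) (b N + size F) (@bge b hb N) (leq_trans (@bge b hb N) (leq_addr _ _)).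
have e3 : \sum_(b N <= j < b N + size F) w (sp l j) = \sum_(x <- F) w x.
  have := @big_cat_nat X 0 +%R (b N) 0 (b N + size F) xpredT (fun j => w (sp l j))
    (leq0n _) (leq_addr _ _).
  rewrite (@sp_sum b l hb0 hb hl _ _ _ N.+1 szF).
  rewrite (@sp_sum b l hb0 hb hl _ _ _ N.+1 (ltnW (hb N))) /=.
  have tA : take (b N + size F) (Gs l N.+1) = Gs l N ++ F.
    rewrite /= take_cat (@G_size b l hb0 hb hl) ltnNge leq_addr /= addKn.
    by rewrite /l take_size_cat.
  have tB : take (b N) (Gs l N.+1) = Gs l N.
    by rewrite /= take_size_cat // (@G_size b l hb0 hb hl).
  rewrite tA tB.
  by rewrite big_cat /= => /addrI.
have := hQ N; rewrite -big_filter -/(rng N) -/F -e3 => h.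
by have := lt_trans h hk; rewrite ltxx.
Qed.
End TailPerm.



Section Main.
Variables (R : realType) (X : completeNormedModType R).
Variables (e : nat -> X) (estar : nat -> X -> R) (eps : nat -> R).
Hypothesis hS : schauder_basis e estar.
Hypothesis hN : normalized e.
Variable x0 : X.
Hypothesis hx0 : extreme_point (brick estar eps) x0.
Variable M0 : R.
Hypothesis hM0 : forall y, extreme_point (brick estar eps) y -> `|y| <= M0.
Hypothesis hub : unconditional e estar \/ boundedly_complete e.

Lemma subset_bound m m' (P : pred nat) :
  `|\sum_(m <= i < m' | P i) estar i x0 *: e i| <= (`|x0| + M0) / 2.
Proof.
set S := \sum_(m <= i < m' | P i) estar i x0 *: e i.
have hy : extreme_point (brick estar eps) (x0 + (-2) *: S).
  apply: (@ext2 R X e estar eps hS) => k.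
  rewrite (@estar_lin R X e estar hS) (@estar_sum R X e estar hS); last first.
    by rewrite /index_iota iota_uniq.
  have hk := @ext1 R X e estar eps hS hN _ hx0 k.
  case: ifP => _; last by rewrite mulr0 addr0.
  have -> : estar k x0 + -2 * estar k x0 = - estar k x0 by ring.
  by rewrite normrN.
have := hM0 _ hy.
have H2 : `|2 *: S| <= `|x0| + `|x0 + (-2) *: S|.
  have -> : 2 *: S = x0 - (x0 + (-2) *: S).
    by rewrite opprD addrA subrr add0r scaleNr opprK.
  exact: ler_normB.
rewrite normrZ (ger0_norm (ler0n _ 2)) in H2.
move=> h; lra.
Qed.

Lemma tail0 d : 0 < d -> exists N, forall m' (P : pred nat),
  `|\sum_(N <= i < m' | P i) estar i x0 *: e i| <= d.
Proof.
move=> d0; case: hub => [hu|bc].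
  apply: (@tail_perm R X (fun k => estar k x0 *: e k)) => // s hs.
  exact: hu x0 s hs.
apply: (@tail_bc R X e (fun k => estar k x0) ((`|x0| + M0) / 2)) => // n P.
exact: subset_bound.
Qed.

Definition inbox (t : nat -> R) := forall i, `|t i| <= eps i.

Lemma tail d : 0 < d -> exists N, forall t, inbox t -> forall m m', (N <= m)%N ->
  `|\sum_(m <= i < m') t i *: e i| <= d.
Proof.
move=> d0; have d20 : 0 < d / 2 by lra.
have [N hNN] := tail0 _ d20.
exists N => t ht m m' Nm.
pose a i := estar i x0.
have ha i : `|a i| = eps i := @ext1 R X e estar eps hS hN _ hx0 i.
pose lam i := t i / a i.
have hl i : `|lam i| <= 1.
  rewrite /lam; have [a0|a0] := eqVneq (a i) 0; first by rewrite a0 invr0 mulr0 normr0.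
  rewrite normrM normfV ler_pdivrMr ?normr_gt0 // mul1r ha; exact: ht.
have ht' i : t i *: e i = lam i *: (a i *: e i).
  rewrite scalerA /lam; have [a0|a0] := eqVneq (a i) 0.
    have := ht i; rewrite -ha a0 normr0 normr_le0 => /eqP->.
    by rewrite !mul0r.
  by rewrite divfK.
rewrite (eq_bigr _ (fun i _ => ht' i)).
have [P hP] := @conv_sgn R X (index_iota m m') 0 (fun i => a i *: e i) lam (iota_uniq _ _) hl.
rewrite !add0r in hP; apply: (le_trans hP).
rewrite (bigID P) /=.
have -> : \sum_(i <- index_iota m m' | ~~ P i) (if P i then a i *: e i else - (a i *: e i))
    = - \sum_(m <= i < m' | ~~ P i) a i *: e i.
  by rewrite -sumrN; apply: eq_bigr => i /negbTE ->.
have -> : \sum_(i <- index_iota m m' | P i) (if P i then a i *: e i else - (a i *: e i))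
    = \sum_(m <= i < m' | P i) a i *: e i.
  by apply: eq_bigr => i ->.
apply: (le_trans (ler_normD _ _)); rewrite normrN.
rewrite !(@shift_sum _ _ N m m' _ Nm).
have h1 := hNN m' (fun i => (m <= i)%N && P i).
have h2 := hNN m' (fun i => (m <= i)%N && ~~ P i).
move: h1 h2; rewrite /a => h1 h2; lra.
Qed.

Definition Phi (t : nat -> R) : X := lim (series (fun n => t n *: e n) @ \oo).

Lemma Phi_cvg t : inbox t -> series (fun n => t n *: e n) @ \oo --> Phi t.
Proof.
move=> ht; apply: cauchy_cvg; apply/cauchy_seriesP => d d0.
have d20 : 0 < d / 2 by lra.
have [N hNN] := tail _ d20.
exists ([set n | (N <= n)%N], [set n | (N <= n)%N]); first by split; exists N.
move=> [n1 n2] /= [h1 h2]; apply: le_lt_trans (hNN t ht n1 n2 h1) _; lra.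
Qed.

Lemma Phi_tail d : 0 < d -> exists N, forall t, inbox t -> forall m, (N <= m)%N ->
  `|Phi t - series (fun n => t n *: e n) m| <= d.
Proof.
move=> d0; have [N hNN] := tail _ d0; exists N => t ht m Nm.
set s := series (fun n => t n *: e n).
rewrite leNgt; apply/negP => hlt.
have dd : 0 < `|Phi t - s m| - d by rewrite subr_gt0.
have := Phi_cvg t ht; move/cvgrPdist_lt => /(_ _ dd) [N' _ hN'].
have h1 := hN' (maxn m N') (leq_maxr _ _).
have h2 : `|s (maxn m N') - s m| <= d.
  by rewrite /s sub_series leq_maxl; exact: hNN t ht m (maxn m N') Nm.
have : `|Phi t - s m| <= `|Phi t - s (maxn m N')| + `|s (maxn m N') - s m|.
  have -> : Phi t - s m = (Phi t - s (maxn m N')) + (s (maxn m N') - s m).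
    by rewrite addrA subrK.
  exact: ler_normD.
move: h1 h2; rewrite /= => h1 h2; lra.
Qed.

Definition box : set {ptws nat -> R} :=
  [set t | forall i, `[- eps i, eps i]%classic (t i)].

Lemma box_inbox (t : nat -> R) : box t -> inbox t.
Proof. by move=> bt i; have := bt i; rewrite /= in_itv /= ler_norml. Qed.

Lemma inbox_box (t : nat -> R) : inbox t -> box t.
Proof. by move=> bt i; have := bt i; rewrite /= in_itv /= ler_norml. Qed.

Lemma box_compact : compact box.
Proof.
exact: (@tychonoff nat (fun _ => R) (fun i => `[- eps i, eps i]%classic)
  (fun i => @segment_compact R _ _)).
Qed.

Lemma projc (i : nat) (t : {ptws nat -> R}) (d : R) : 0 < d ->
  \forall u \near t, `|t i - u i| < d.
Proof.
move=> d0.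
have H : (fun u : {ptws nat -> R} => u i) @ t --> t i.
  exact: (@proj_continuous nat (fun _ => R) i t).
by move: H => /cvgrPdist_lt /(_ d d0).
Qed.

Lemma Phi_cont : {within box, continuous (Phi : {ptws nat -> R} -> X)}.
Proof.
apply/subspace_continuousP => t bt; apply/cvgrPdist_lt => d d0.
have d4 : 0 < d / 4 by lra.
have [N hNN] := Phi_tail _ d4.
have hN1 : 0 < N.+1%:R :> R by rewrite ltr0n.
pose del := d / 4 / N.+1%:R.
have del0 : 0 < del by rewrite divr_gt0.
have H : \forall u \near t, forall i : 'I_N, `|t (val i) - u (val i)| < del.
  exact: (@filter_forall _ 'I_N (fun (i : 'I_N) (u : {ptws nat -> R}) => `|t (val i) - u (val i)| < del) (nbhs t) _ (fun i => projc (val i) t del del0)).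
rewrite near_withinE; apply: filterS H => u hu bu.
have ht := hNN t (box_inbox _ bt) N (leqnn N).
have hu' := hNN u (box_inbox _ bu) N (leqnn N).
set st := series (fun n => t n *: e n) N in ht *.
set su := series (fun n => u n *: e n) N in hu' *.
have hm : `|st - su| <= d / 4.
  rewrite /st /su /series /= -sumrB big_mkord.
  apply: (le_trans (ler_norm_sum _ _ _)).
  have -> : \sum_(i < N) `|t i *: e i - u i *: e i| = \sum_(i < N) `|t i - u i|.
    by apply: eq_bigr => i _; rewrite -scalerBl normrZ hN mulr1.
  apply: (@le_trans _ _ (\sum_(i < N) del)).
    by apply: ler_sum => i _; exact: ltW (hu i).
  rewrite sumr_const card_ord /del.
  have -> : (d / 4 / N.+1%:R) *+ N = (d / 4) * (N%:R / N.+1%:R).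
    by rewrite -mulr_natr mulrA mulrAC.
  rewrite -[X in _ <= X]mulr1 ler_wpM2l ?(ltW d4) //.
  by rewrite ler_pdivrMr // mul1r ler_nat.
have -> : Phi t - Phi u = (Phi t - st) + (st - su) - (Phi u - su).
  by rewrite opprB !addrA !subrK.
apply: (le_lt_trans (ler_normB _ _)).
apply: (le_lt_trans (lerD (ler_normD _ _) (lexx _))).
lra.
Qed.

End Main.



Theorem theorem3p5 (R : realType) (X : completeNormedModType R)
  (e : nat -> X) (estar : nat -> X -> R) (eps : nat -> R) :
  schauder_basis e estar ->
  normalized e ->
  unconditional e estar \/ boundedly_complete e ->
  (forall n, 0 <= eps n) ->
  (extreme_radius (brick estar eps) < +oo)%E ->
  compact (brick estar eps).
Proof.
move=> hS hN hub heps hrad.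
have [x0 [hx0 [M0 hM0]]] := @radius_bound _ _ _ _ hrad.
have -> : brick estar eps = (@Phi R X e : {ptws nat -> R} -> X) @` (box R eps).
  apply/seteqP; split.
    move=> x bx; exists (fun n => estar n x).
      by apply: (@inbox_box R eps) => n; exact: bx.
    by apply: (cvg_lim (@norm_hausdorff R X)); exact: (proj1 hS x).
  move=> _ [t bt <-] n.
  have ht := @box_inbox R eps t bt.
  rewrite -(proj2 hS (@Phi R X e t) t
    (@Phi_cvg R X e estar eps hS hN x0 hx0 M0 hM0 hub t ht) n).
  exact: ht.
apply: continuous_compact; last exact: (box_compact R eps).
exact: (@Phi_cont R X e estar eps hS hN x0 hx0 M0 hM0 hub).
Qed.
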